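(* Let $\mathbf a=(a_i)_{i\ge0}$ be the fixed point beginning with $0$ of the $3$-uniform morphism $\sigma$ on $\{0,1,2\}$ defined by $\sigma(0)=010$, $\sigma(1)=102$, $\sigma(2)=122$, with letters viewed as elements of $\mathbb{F}_3$, and let $f_{\mathbf a}(T)=\sum_{i\ge0}a_iT^{-i}\in\mathbb{F}_3[[T^{-1}]]$. Then $$2.66\le\mu(f_{\mathbf a})\le2.81.$$
   Context: The fixed point is $\sigma^\infty(0)=\lim_n\sigma^n(0)=010102010\cdots$. Fix a real $|T|>1$; $|g|=|T|^{-i_0}$ for $g\in\mathbb{F}_3((T^{-1}))$ with leading term $T^{-i_0}$. The irrationality exponent $\mu(f)$ is the supremum of real $\tau$ such that $|f-P/Q|<|Q|^{-\tau}$ has infinitely many solutions $(P,Q)\in\mathbb{F}_3[T]^2$, $Q\ne0$. *)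

(* Defs.v *)
From HB Require Import structures.
From mathcomp Require Import all_boot all_order all_algebra.
From mathcomp Require Import all_classical all_reals all_analysis.
Set Implicit Arguments. Unset Strict Implicit. Unset Printing Implicit Defensive.
Import Order.TTheory GRing.Theory Num.Theory.
Local Open Scope classical_set_scope.
Local Open Scope ring_scope.

Notation F3 := 'F_3.

Definition sigma (x : F3) : seq F3 :=
  if x == 0 then [:: 0; 1; 0]
  else if x == 1 then [:: 1; 0; 2%:R]
  else [:: 1; 2%:R; 2%:R].

Definition sigma_word (w : seq F3) : seq F3 := flatten (map sigma w).

Definition sigma_iter (n : nat) : seq F3 := iter n sigma_word [:: 0].

(* The fixed point sigma^oo(0) = lim_n sigma^n(0): its i-th letter is the
   i-th letter of sigma^(i+1)(0) (which has length 3^(i+1) > i, and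
   sigma^n(0) is a prefix of sigma^(n+1)(0)). *)
Definition afix (i : nat) : F3 := nth 0 (sigma_iter i.+1) i.

(* Elements of F_3((T^-1)) are represented by their coefficient function
   c : int -> F_3 (c k = coefficient of T^k), with support bounded above. *)
Definition laurent := int -> F3.

(* The absolute value |g| = |T|^(k0) where T^(k0) is the leading term of g,
   |0| = 0; here tT stands for the real |T| > 1.  Written as a supremum
   (sup of the empty set is 0). *)
Definition labs {R : realType} (tT : R) (g : laurent) : R :=
  sup [set powR tT (k%:~R) | k in [set k : int | g k != 0]].

Definition poly_laurent (P : {poly F3}) : laurent :=
  fun k => match k with Posz n => P`_n | Negz _ => 0 end.

Definition f_a : laurent :=
  fun k => match k with Posz 0 => afix 0 | Posz _ => 0 | Negz n => afix n.+1 end.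

Definition poly_mul_laurent (Q : {poly F3}) (g : laurent) : laurent :=
  fun k => \sum_(j < size Q) Q`_j * g (k - (j%:Z)).

Definition lsub (g h : laurent) : laurent := fun k => g k - h k.

(* |f - P/Q|, computed as |Q f - P| / |Q| (multiplicativity of the
   absolute value; P/Q is the Laurent expansion of the rational function). *)
Definition dist_rat {R : realType} (tT : R) (f : laurent) (P Q : {poly F3}) : R :=
  labs tT (lsub (poly_mul_laurent Q f) (poly_laurent P)) / labs tT (poly_laurent Q).

Definition approx_exponents {R : realType} (tT : R) (f : laurent) : set R :=
  [set tau : R | ~ finite_set
     [set PQ : {poly F3} * {poly F3} | PQ.2 != 0 /\
        dist_rat tT f PQ.1 PQ.2 < powR (labs tT (poly_laurent PQ.2)) (- tau)]].

Definition irrationality_exponent {R : realType} (tT : R) (f : laurent) : \bar R :=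
  ereal_sup [set x%:E | x in approx_exponents tT f].

(* Main.v *)
Require Import Defs.
From HB Require Import structures.
From mathcomp Require Import all_boot all_order all_algebra.
From mathcomp Require Import all_classical all_reals all_analysis.
From mathcomp Require Import zify ring lra.
Import Order.TTheory GRing.Theory Num.Theory.
Local Open Scope ring_scope.
Local Open Scope nat_scope.

Lemma size_sigma x : size (sigma x) = 3%N.
Proof. by rewrite /sigma; case: (x == 0%R); case: (x == 1%R). Qed.

Lemma size_sigma_word w : size (sigma_word w) = (3 * size w)%N.
Proof.
elim: w => //= x w IH.
by rewrite /sigma_word /= size_cat size_sigma -/(sigma_word w) IH mulnS.
Qed.

Lemma size_sigma_iter n : size (sigma_iter n) = (3 ^ n)%N.
Proof. by elim: n => //= n IH; rewrite size_sigma_word IH expnS. Qed.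

Lemma sigma_iterS n : sigma_iter n.+1 = sigma_word (sigma_iter n).
Proof. by []. Qed.

Lemma nth_sigma_word w i j : (i < size w)%N -> (j < 3)%N ->
  nth 0%R (sigma_word w) (3 * i + j) = nth 0%R (sigma (nth 0%R w i)) j.
Proof.
elim: w i => // x w IH [|i] /= Hi Hj.
  by rewrite /sigma_word /= nth_cat size_sigma muln0 add0n Hj.
rewrite /sigma_word /= nth_cat size_sigma.
have -> : (3 * i.+1 + j < 3)%N = false by lia.
have -> : (3 * i.+1 + j - 3 = 3 * i + j)%N by lia.
by rewrite -/(sigma_word w) IH.
Qed.

Lemma nth_iter_succ n i : (i < 3 ^ n)%N ->
  nth 0%R (sigma_iter n.+1) i = nth 0%R (sigma_iter n) i.
Proof.
elim: n i => [|n IH] i Hi.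
  by move: Hi; rewrite expn0; case: i => // _; vm_compute.
rewrite (divn_eq i 3) mulnC sigma_iterS nth_sigma_word ?size_sigma_iter
  ?ltn_mod //; last by rewrite expnS in Hi *; lia.
rewrite IH; last first. rewrite expnS in Hi *; lia.
by rewrite sigma_iterS nth_sigma_word ?size_sigma_iter ?ltn_mod //; rewrite expnS in Hi *; lia.
Qed.

Lemma nth_iter_le n m i : (n <= m)%N -> (i < 3 ^ n)%N ->
  nth 0%R (sigma_iter m) i = nth 0%R (sigma_iter n) i.
Proof.
elim: m => [|m IH] Hnm Hi; first by move: Hnm; rewrite leqn0 => /eqP ->.
case: (ltngtP n m.+1) Hnm => // [Hlt|<-] _ //.
have Hnm : (n <= m)%N by lia.
rewrite nth_iter_succ ?IH //.
apply: (leq_trans Hi); rewrite leq_exp2l //.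
Qed.

Lemma afixE n i : (i < 3 ^ n)%N -> afix i = nth 0%R (sigma_iter n) i.
Proof.
move=> Hi; rewrite /afix.
have Hi1 : (i < 3 ^ i.+1)%N by apply: (ltn_trans (ltn_expl i (isT : (1 < 3)%N))); rewrite ltn_exp2l.
by rewrite -(nth_iter_le _ _ _ (leq_maxl i.+1 n) Hi1) (nth_iter_le _ _ _ (leq_maxr i.+1 n) Hi).
Qed.

Lemma afix3 i j : (j < 3)%N -> afix (3 * i + j) = nth 0%R (sigma (afix i)) j.
Proof.
move=> Hj.
have Hi1 : (i < 3 ^ i.+1)%N by apply: (ltn_trans (ltn_expl i (isT : (1 < 3)%N))); rewrite ltn_exp2l.
rewrite (afixE i.+2); last first.
  have : (i.+1 <= 3 ^ i.+1)%N by [].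
  rewrite (expnS _ i.+1); lia.
by rewrite sigma_iterS nth_sigma_word ?size_sigma_iter // -afixE.
Qed.

Lemma afix_small i : (i < 27)%N -> afix i = nth 0%R (sigma_iter 3) i.
Proof. exact: afixE 3 i. Qed.

Local Open Scope ring_scope.

Lemma sig_facts (x : F3) :
  [/\ (nth 0 (sigma x) 0 == 0) = (x == 0),
      nth 0 (sigma x) 0 + nth 0 (sigma x) 2 = 0 &
      nth 0 (sigma x) 1 = 1 - x].
Proof. by case: x => [[|[|[|]]] ?] //; split; (apply/val_inj || idtac); vm_compute; reflexivity. Qed.

Lemma afix3_0 x : afix (3 * x)%N = nth 0 (sigma (afix x)) 0.
Proof. by rewrite -(addn0 (3 * x)%N) afix3. Qed.

Lemma afix_mul3_eq0 x : (afix (3 * x)%N == 0) = (afix x == 0).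
Proof. by rewrite afix3_0; case: (sig_facts (afix x)). Qed.

Lemma afix_per k m : (m < 10 * 3 ^ k)%N -> afix (m + 2 * 3 ^ k.+1)%N = afix m.
Proof.
elim: k m => [|k IH] m Hm.
  move: Hm; rewrite expn0 muln1 => Hm.
  rewrite !afix_small; try (rewrite ?expn1; lia).
  by do 10 (case: m Hm => [|m] Hm; first by vm_compute; reflexivity); lia.
rewrite (divn_eq m 3) mulnC.
have -> : (3 * (m %/ 3) + m %% 3 + 2 * 3 ^ k.+2 =
           3 * (m %/ 3 + 2 * 3 ^ k.+1) + m %% 3)%N.
  by rewrite (expnS _ k.+1); lia.
rewrite !afix3 ?ltn_mod // IH //.
by move: Hm; rewrite expnS; lia.
Qed.

Lemma afix_L k : afix (10 * 3 ^ k)%N = 0.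
Proof.
elim: k => [|k IH]; first by rewrite afix_small //; vm_compute; reflexivity.
by apply/eqP; rewrite expnS mulnCA afix_mul3_eq0 IH.
Qed.

Lemma afix_LS k : afix (16 * 3 ^ k)%N != 0.
Proof.
elim: k => [|k IH]; first by rewrite afix_small //; vm_compute; reflexivity.
by rewrite expnS mulnCA afix_mul3_eq0.
Qed.

Lemma afix_S k : afix (2 * 3 ^ k)%N = 0.
Proof.
elim: k => [|k IH]; first by rewrite afix_small //; vm_compute; reflexivity.
by apply/eqP; rewrite expnS mulnCA afix_mul3_eq0 IH.
Qed.

Definition G (c : F3) N := \sum_(i < N) c ^+ i * afix i.

Lemma pairsum (c : F3) M : c ^+ 2 = 1 -> \sum_(i < (2 * M)%N) c ^+ i = M%:R * (1 + c).
Proof.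
move=> c2; elim: M => [|M IH]; first by rewrite muln0 big_ord0 mul0r.
rewrite mulnS !big_ord_recr /= IH.
have -> : c ^+ (2 * M)%N = 1 by rewrite exprM c2 expr1n.
rewrite exprS.
have -> : c ^+ (2 * M)%N = 1 by rewrite exprM c2 expr1n.
by rewrite mulr1 mulrSr mulrDl mul1r addrA.
Qed.

Lemma G3 (c : F3) N : c ^+ 2 = 1 ->
  G c (3 * N)%N = c * (\sum_(i < N) c ^+ i) - c * G c N.
Proof.
move=> c2; rewrite /G; elim: N => [|N IH]; first by rewrite muln0 !big_ord0 !mulr0 subr0.
have e0 : c ^+ (3 * N)%N = c ^+ N by rewrite exprM exprS c2 mulr1.
have T j : (j < 3)%N -> c ^+ (3 * N + j)%N * afix (3 * N + j)%N =
    c ^+ N * (c ^+ j * nth 0 (sigma (afix N)) j).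
  by move=> hj; rewrite afix3 // exprD e0 mulrA.
rewrite mulnS !big_ord_recr /= IH.
have -> : ((3 * N).+2 = 3 * N + 2)%N by lia.
have -> : ((3 * N).+1 = 3 * N + 1)%N by lia.
rewrite -[X in c ^+ X * afix X](addn0 (3 * N)%N) !T //.
case: (sig_facts (afix N)) => _ h02 h1.
have -> : nth 0 (sigma (afix N)) 2 = - nth 0 (sigma (afix N)) 0.
  by apply/eqP; rewrite -addr_eq0 addrC h02.
rewrite h1 expr0 expr1 c2; ring.
Qed.

Lemma three0 : (3%:R : F3) = 0. Proof. by apply/val_inj. Qed.

Lemma G_ne0 (c : F3) k : c ^+ 2 = 1 -> G c 6 != 0 -> G c (2 * 3 ^ k.+1)%N != 0.
Proof.
move=> c2 h6; elim: k => [|k IH]; first by rewrite expn1; exact: h6.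
have c0 : c != 0 by apply/eqP => h; move: c2; rewrite h expr2 mulr0 => /esym/eqP; rewrite oner_eq0.
rewrite (expnS _ k.+1) mulnCA G3 // pairsum // natrX three0 expr0n /= mul0r mulr0 sub0r.
by rewrite oppr_eq0 mulf_neq0.
Qed.

Lemma G6_1 : G 1 6 != 0.
Proof. by rewrite /G !big_ord_recr big_ord0 /=. Qed.
Lemma G6_m1 : G (-1) 6 != 0.
Proof. by rewrite /G !big_ord_recr big_ord0 /=. Qed.

Definition Sk k := (2 * 3 ^ k.+1)%N.
Definition Lk k := (10 * 3 ^ k)%N.
Definition qk k : {poly F3} := 'X^(Sk k) - 1.
Definition pk k : {poly F3} := \poly_(i < (Sk k).+1) afix (Sk k - i)%N.

Lemma pk_horner k (c : F3) : c ^+ 2 = 1 -> (pk k).[c] = G c (Sk k).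
Proof.
move=> c2; rewrite /pk horner_poly (reindex_inj rev_ord_inj) /= big_ord_recr /=.
rewrite subnn subn0 {2}/Sk afix_S mul0r addr0 /G.
apply: eq_bigr => i _.
have hi := ltn_ord i.
have -> : (Sk k - ((Sk k).+1 - (widen_ord (leqnSn (Sk k)) i).+1) = i)%N.
  by rewrite /=; lia.
rewrite mulrC; congr (_ * _).
have cS : c ^+ (Sk k) = 1 by rewrite /Sk exprM c2 expr1n.
have ci : c ^+ i * c ^+ i = 1 by rewrite -exprD addnn -mul2n exprM c2 expr1n.
rewrite /= subSS.
have : c ^+ (Sk k - i)%N * c ^+ i = 1 by rewrite -exprD subnK ?cS //; lia.
by move=> h; rewrite -[LHS]mulr1 -ci mulrA h mul1r.
Qed.

Lemma frob3 (y z : {poly F3}) : (y - z) ^+ 3 = y ^+ 3 - z ^+ 3.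
Proof.
have -> : (y - z) ^+ 3 = y ^+ 3 - z ^+ 3 - 3%:R * (y ^+ 2 * z - y * z ^+ 2) by ring.
by rewrite -polyC_natr three0 mul0r subr0.
Qed.

Lemma qk_pow m : ('X^(2 * 3 ^ m) - 1 : {poly F3}) = ('X^2 - 1) ^+ (3 ^ m).
Proof.
elim: m => [|m IH]; first by rewrite expn0 muln1 expr1.
by rewrite expnSr [RHS]exprM -IH frob3 expr1n -exprM mulnA.
Qed.

Lemma coprime_qp k : coprimep (qk k) (pk k).
Proof.
rewrite coprimep_sym /qk /Sk qk_pow coprimep_expr //.
have -> : ('X^2 - 1 : {poly F3}) = ('X - 1%:P) * ('X - (-1)%:P).
  by rewrite polyCN polyC1; ring.
rewrite coprimepMr !coprimep_XsubC /root.
rewrite !pk_horner ?expr1n ?sqrrN ?expr1n //.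
by rewrite G_ne0 ?expr1n ?sqrrN ?expr1n ?G6_1 ?G6_m1 // G_ne0 ?expr1n ?sqrrN ?expr1n ?G6_1 ?G6_m1.
Qed.

Local Open Scope ring_scope.

Notation Lmul := poly_mul_laurent.
Notation pl := poly_laurent.

Lemma afix0 : afix 0 = 0. Proof. by vm_compute; reflexivity. Qed.

Lemma fa_neg (n : nat) : f_a (- (n%:Z)) = afix n.
Proof. by case: n. Qed.

Lemma fa_nonneg (i : nat) : f_a (Posz i) = 0.
Proof. by case: i => [|i] //; exact: afix0. Qed.

Lemma fa_ge0 (k : int) : (0 <= k)%R -> f_a k = 0.
Proof. by case: k => // i _; exact: fa_nonneg. Qed.

Lemma pl_neg p (k : int) : (k < 0)%R -> pl p k = 0.
Proof. by case: k. Qed.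

Lemma widen_sum (F : nat -> F3) m d :
  (forall j, (m <= j < m + d)%N -> F j = 0) ->
  \sum_(j < m) F j = \sum_(j < m + d) F j.
Proof.
elim: d => [|d IH] H; first by rewrite addn0.
rewrite addnS big_ord_recr /= -IH ?H ?addr0 //; first lia.
by move=> j hj; apply: H; lia.
Qed.

Lemma Lmul_sub Q g1 g2 k :
  Lmul Q (lsub g1 g2) k = Lmul Q g1 k - Lmul Q g2 k.
Proof. by rewrite /poly_mul_laurent /lsub -sumrB; apply: eq_bigr => j _; rewrite mulrBr. Qed.

Lemma mulq S g k : (0 < S)%N -> Lmul ('X^S - 1) g k = g (k - S%:Z) - g k.
Proof.
case: S => [//|S _].
have hs : size ('X^(S.+1) - 1 : {poly F3}) = S.+2.
  rewrite -(size_XnsubC (1 : F3) (ltn0Sn S)).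
  rewrite polyC1.
  reflexivity.
rewrite /poly_mul_laurent hs.
rewrite big_ord_recr.
rewrite big_ord_recl.
rewrite !coefB !coefXn !coef1.
rewrite /=.
rewrite big1; last first.
  move=> j _; rewrite coefB coefXn coef1 /=.
  have -> : (bump 0 j == S.+1) = false.
    apply/negbTE; have := ltn_ord j; rewrite /bump /=; lia.
  by rewrite subrr mul0r.
rewrite eqxx addr0 sub0r mulN1r subr0 subr0 mul1r addrC.
reflexivity.
Qed.

Lemma Lmul_comm_q S Q g k : (0 < S)%N ->
  Lmul ('X^S - 1) (Lmul Q g) k = Lmul Q (Lmul ('X^S - 1) g) k.
Proof.
move=> S0; rewrite mulq //.
have -> : Lmul Q (Lmul ('X^S - 1) g) k =
    \sum_(j < size Q) Q`_j * (g (k - (nat_of_ord j)%:Z - S%:Z) - g (k - (nat_of_ord j)%:Z)).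
  by apply: eq_bigr => j _; rewrite mulq.
rewrite /poly_mul_laurent -sumrB; apply: eq_bigr => j _.
by rewrite mulrBr addrAC.
Qed.

Lemma Lmul_pl Q p k : Lmul Q (pl p) k = pl (Q * p) k.
Proof.
case: k => [n|n]; last first.
  rewrite /poly_mul_laurent big1 // => j _; rewrite pl_neg ?mulr0 //.
rewrite /= coefM /poly_mul_laurent.
pose Gf j := if (j <= n)%N then Q`_j * p`_(n - j) else 0.
have -> : \sum_(j < n.+1) Q`_j * p`_(n - j) = \sum_(j < n.+1) Gf j.
  by apply: eq_bigr => j _; rewrite /Gf -ltnS ltn_ord.
rewrite (widen_sum Gf n.+1 (size Q)); last by move=> j /andP[hj _]; rewrite /Gf leqNgt hj.
rewrite (widen_sum (fun j => Q`_j * pl p (n%:Z - j%:Z)) (size Q) n.+1); last first.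
  by move=> j /andP[hj _]; rewrite nth_default ?mul0r.
rewrite addnC; apply: eq_bigr => j _; rewrite /Gf.
case: ifP => hj.
  by have -> : (n%:Z - (nat_of_ord j)%:Z) = Posz (n - j)%N by lia.
by rewrite pl_neg ?mulr0 //; lia.
Qed.

Lemma LmulQf_zero (Q : {poly F3}) (k : int) : ((size Q).-1%:Z < k)%R -> Lmul Q f_a k = 0.
Proof.
move=> hk; rewrite /poly_mul_laurent big1 // => j _.
by rewrite fa_ge0 ?mulr0 //; have := ltn_ord j; lia.
Qed.

Definition ek K : laurent := lsub (Lmul (qk K) f_a) (pl (pk K)).

Lemma Sk_gt0 K : (0 < Sk K)%N.
Proof. by rewrite /Sk expnS; lia. Qed.

Lemma ek_zero K (x : int) : (- (Lk K)%:Z < x)%R -> ek K x = 0.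
Proof.
move=> hx; rewrite /ek /lsub /qk mulq ?Sk_gt0 //.
case: (lerP 0 x) => h0.
  case: x hx h0 => [i|//] _ _.
  rewrite fa_nonneg subr0 /pk /= coef_poly.
  case: ifP => hi.
    have -> : (i%:Z - (Sk K)%:Z) = - ((Sk K - i)%N%:Z) by lia.
    by rewrite fa_neg subrr.
  have -> : (i%:Z - (Sk K)%:Z) = Posz (i - Sk K)%N by lia.
  by rewrite fa_nonneg subrr.
rewrite pl_neg // subr0.
have [m hm] : exists m : nat, x = - (m%:Z) by exists `|x|%N; lia.
have hm1 : (m < Lk K)%N by lia.
have -> : (x - (Sk K)%:Z) = - ((m + Sk K)%N%:Z) by lia.
by rewrite hm !fa_neg afix_per // subrr.
Qed.

Lemma ek_L K : ek K (- (Lk K)%:Z) != 0.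
Proof.
rewrite /ek /lsub /qk mulq ?Sk_gt0 // pl_neg; last by rewrite /Lk; lia.
have -> : (- (Lk K)%:Z - (Sk K)%:Z) = - ((16 * 3 ^ K)%N%:Z).
  by rewrite /Lk /Sk expnS; lia.
by rewrite !fa_neg /Lk afix_L subr0 subr0 afix_LS.
Qed.

Lemma key_ident K Q P k :
  Lmul (qk K) (lsub (Lmul Q f_a) (pl P)) k - Lmul Q (ek K) k =
  pl (Q * pk K) k - pl (qk K * P) k.
Proof.
rewrite Lmul_sub /ek Lmul_sub /qk Lmul_comm_q ?Sk_gt0 // !Lmul_pl.
set a := Lmul _ _ k; set b := pl _ k; set c := pl _ k.
by clearbody a b c; ring.
Qed.

Lemma size_qk K : size (qk K) = (Sk K).+1.
Proof. by rewrite /qk -[RHS](size_XnsubC (1 : F3) (Sk_gt0 K)) polyC1. Qed.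

Lemma qk_neq0 K : qk K != 0.
Proof. by rewrite -size_poly_eq0 size_qk. Qed.

Lemma pl_pos p (i : nat) : pl p (Posz i) = p`_i.
Proof. by []. Qed.

Lemma natz_R (R : realType) (n : nat) : (n%:Z)%:~R = n%:R :> R.
Proof. by []. Qed.

Lemma exists_k n : (10 <= n)%N -> exists K, (10 * 3 ^ K <= n < 10 * 3 ^ K.+1)%N.
Proof.
elim/ltn_ind: n => n IH hn.
case: (ltnP n 30) => h30; first by exists 0%N; rewrite expn0 expn1; lia.
have [K hK] := IH (n %/ 3)%N ltac:(lia) ltac:(lia).
by exists K.+1; move: hK; rewrite !expnS; lia.
Qed.

Section Real.
Variables (R : realType) (tT : R).
Hypothesis htT : 1 < tT.

Let tT0 : 0 < tT. Proof. by apply: lt_trans htT. Qed.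

Lemma Epos r : 0 < tT `^ r.
Proof. exact: powR_gt0. Qed.

Lemma Elt x y : x < y -> tT `^ x < tT `^ y.
Proof.
move=> xy; rewrite -ltr_ln ?posrE ?Epos // !ln_powR ltr_pM2r //.
exact: ln_gt0.
Qed.

Lemma Ele x y : x <= y -> tT `^ x <= tT `^ y.
Proof. by apply: ler_powR; apply: ltW. Qed.

Lemma Elt_inv x y : tT `^ x < tT `^ y -> x < y.
Proof. by move=> h; rewrite ltNge; apply/negP => /Ele; rewrite leNgt h. Qed.

Lemma ED x y : tT `^ (x + y) = tT `^ x * tT `^ y.
Proof. by rewrite powRD //; apply/implyP => _; rewrite gt_eqF. Qed.

Lemma EB x y : tT `^ (x - y) = tT `^ x / tT `^ y.
Proof. by rewrite powRB //; apply/implyP => _; rewrite gt_eqF. Qed.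

Lemma labs_le (g : laurent) (r : R) :
  (forall k, g k != 0 -> k%:~R <= r) -> labs tT g <= tT `^ r.
Proof.
move=> H; rewrite /labs.
case: (pselect (exists k, g k != 0)) => [[k0 hk0]|hn].
  apply: ge_sup; first by exists (tT `^ k0%:~R); exists k0.
  by move=> x [k hk <-]; apply: Ele; apply: H.
set A := (X in sup X).
have -> : A = set0.
  by apply/seteqP; split => // x [k hk _]; apply: hn; exists k.
by rewrite sup0; apply: ltW; apply: Epos.
Qed.

Lemma labs_ge (g : laurent) (K k0 : int) :
  (forall k, g k != 0 -> k <= K) -> g k0 != 0 -> tT `^ k0%:~R <= labs tT g.
Proof.
move=> H hk0; rewrite /labs; apply: ub_le_sup; last by exists k0.
exists (tT `^ K%:~R) => x [k hk <-]; apply: Ele; rewrite ler_int; exact: H.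
Qed.

Lemma labs_poly (Q : {poly F3}) : Q != 0 ->
  labs tT (pl Q) = tT `^ ((size Q).-1)%:R.
Proof.
move=> Q0; apply/eqP; rewrite eq_le; apply/andP; split.
  apply: labs_le => -[n|n] //= hn.
  rewrite ler_nat -ltnS prednK ?size_poly_gt0 //.
  by rewrite ltnNge; apply: contra hn => h; rewrite nth_default.
apply: (labs_ge (pl Q) ((size Q).-1)%:Z ((size Q).-1)%:Z).
  move=> -[n|n] //= hn.
  rewrite lez_nat -ltnS prednK ?size_poly_gt0 //.
  by rewrite ltnNge; apply: contra hn => h; rewrite nth_default.
by rewrite /= -lead_coefE lead_coef_eq0.
Qed.

End Real.
Arguments Epos {R tT}. Arguments Elt {R tT}. Arguments Ele {R tT}.
Arguments Elt_inv {R tT}. Arguments ED {R tT}. Arguments EB {R tT}.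
Arguments labs_le {R tT}. Arguments labs_ge {R tT}. Arguments labs_poly {R tT}.

Section Main.
Variables (R : realType) (tT : R).
Hypothesis htT : 1 < tT.

Definition hfun P Q : laurent := lsub (Lmul Q f_a) (pl P).

Lemma h_supp P (Q : {poly F3}) k : hfun P Q k != 0 -> k <= ((size Q).-1 + size P)%N%:Z.
Proof.
move=> hk; rewrite leNgt; apply/negP => hk2; move: hk; apply/negP; rewrite negbK.
rewrite /hfun /lsub LmulQf_zero; last by apply: le_lt_trans hk2; rewrite lez_nat leq_addr.
case: k hk2 => [i|//] hi.
have hi2 : ((size Q).-1 + size P < i)%N by rewrite -ltz_nat.
by rewrite pl_pos nth_default ?subrr //; exact: (leq_trans (leq_addl _ _) (ltnW hi2)).
Qed.

Lemma sol_hB (tau : R) P Q : Q != 0 ->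
  dist_rat tT f_a P Q < powR (labs tT (pl Q)) (- tau) ->
  forall x, hfun P Q x != 0 -> x%:~R < ((size Q).-1)%:R * (1 - tau).
Proof.
move=> Q0 H x hx.
rewrite /dist_rat (labs_poly htT) // in H.
rewrite -powRrM ltr_pdivrMr ?(Epos htT) // -(ED htT) in H.
have := labs_ge htT (hfun P Q) _ x (h_supp P Q) hx.
move=> /le_lt_trans /(_ H) /(Elt_inv htT).
by rewrite mulrBr mulr1 addrC mulrN.
Qed.


Lemma no_sol (tau : R) (P Q : {poly F3}) : 281 / 100 < tau -> Q != 0 -> (10 <= (size Q).-1)%N ->
  ~ (dist_rat tT f_a P Q < powR (labs tT (pl Q)) (- tau)).
Proof.
move=> htau Q0 hn H.
have hB := sol_hB tau P Q Q0 H.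
move: hn hB; set n := (size Q).-1 => hn hB.
have [K /andP[hK1 hK2]] := exists_k n hn.
have eS : Sk K.+1 = (18 * 3 ^ K)%N by rewrite /Sk !expnS; lia.
have eL : Lk K.+1 = (30 * 3 ^ K)%N by rewrite /Lk !expnS; lia.
have hnL : (n < Lk K.+1)%N by rewrite eL; move: hK2; rewrite expnS; lia.
pose t : R := (3 ^ K)%:R.
have t0 : 0 < t by rewrite ltr0n expn_gt0.
have nR : 10 * t <= n%:R.
  have : ((10 * 3 ^ K)%N%:R <= n%:R :> R) by rewrite ler_nat.
  by rewrite natrM.
have SR : (Sk K.+1)%:R = 18 * t :> R by rewrite eS natrM.
have LR : (Lk K.+1)%:R = 30 * t :> R by rewrite eL natrM.
have hz : forall x : int, - (Sk K.+1)%:Z <= x -> hfun P Q x = 0.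
  move=> x hx; apply/eqP; apply: contraT => /hB hx'.
  have : (- (Sk K.+1)%:Z)%:~R <= x%:~R :> R by rewrite ler_int.
  rewrite intrN natz_R SR => hx2.
  have h1 : 0 <= (n%:R - 10 * t) * (tau - 1) by apply: mulr_ge0; lra.
  nra.
have key := key_ident K.+1 Q P.
have hD : Q * pk K.+1 = qk K.+1 * P.
  apply/eqP; rewrite -subr_eq0; apply/eqP/polyP => i; rewrite coef0 coefB.
  rewrite -!pl_pos -key -/(hfun P Q).
  rewrite /qk mulq ?Sk_gt0 // !hz; last 2 first.
  - by lia.
  - by lia.
  rewrite subrr sub0r /poly_mul_laurent big1 ?oppr0 // => j _.
  rewrite ek_zero ?mulr0 //.
  have hj : (nat_of_ord j <= n)%N.
    by rewrite /n -ltnS prednK ?size_poly_gt0 // ltn_ord.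
  lia.
have hdiv : qk K.+1 %| Q.
  by rewrite -(Gauss_dvdpl _ (coprime_qp K.+1)) hD dvdp_mulIl.
have hSn : (Sk K.+1 <= n)%N.
  have h1 := dvdp_leq Q0 hdiv; rewrite size_qk in h1.
  by rewrite /n -ltnS prednK ?size_poly_gt0.
have al : forall k, Lmul (qk K.+1) (hfun P Q) k = Lmul Q (ek K.+1) k.
  move=> k; apply/eqP; rewrite -subr_eq0; apply/eqP.
  by rewrite /hfun key hD subrr.
pose M : int := n%:Z - (Lk K.+1)%:Z.
have sQ : (n < size Q)%N by rewrite /n prednK // size_poly_gt0.
have hM : Lmul Q (ek K.+1) M != 0.
  rewrite /poly_mul_laurent (bigD1 (Ordinal sQ)) //= big1 ?addr0.
    apply: mulf_neq0; first by rewrite /n -lead_coefE lead_coef_eq0.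
    have -> : M - n%:Z = - (Lk K.+1)%:Z by rewrite /M; lia.
    exact: ek_L.
  move=> j hj; rewrite ek_zero ?mulr0 //.
  have hj2 : (nat_of_ord j != n)%N.
    by move: hj; apply: contra => /eqP hj; apply/eqP/val_inj.
  have hjn : (nat_of_ord j <= n)%N.
    by rewrite /n -ltnS prednK ?size_poly_gt0 // ltn_ord.
  have hjn2 : (nat_of_ord j < n)%N by rewrite ltn_neqAle hj2 hjn.
  rewrite /M; lia.
move: hM; rewrite -al /qk mulq ?Sk_gt0 // => hM.
have [x [hx1 hx2]] : exists x : int, M - (Sk K.+1)%:Z <= x /\ hfun P Q x != 0.
  case: (eqVneq (hfun P Q M) 0) => hM0.
    exists (M - (Sk K.+1)%:Z); split => //.
    by move: hM; rewrite hM0 subr0.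
  by exists M; split => //; rewrite gerBl.
have := hB x hx2.
have : (M - (Sk K.+1)%:Z)%:~R <= x%:~R :> R by rewrite ler_int.
rewrite /M !intrB !natz_R SR LR => hx3 hx4.
have hSn' : 18 * t <= n%:R by rewrite -SR ler_nat.
have h1 : 0 <= (n%:R - 18 * t) * tau by apply: mulr_ge0; lra.
nra.
Qed.

Lemma sol_lower K :
  dist_rat tT f_a (pk K) (qk K) < powR (labs tT (pl (qk K))) (- (266 / 100)).
Proof.
rewrite /dist_rat (labs_poly htT _ (qk_neq0 K)) size_qk /=.
rewrite -powRrM ltr_pdivrMr ?(Epos htT) // -(ED htT).
have he : labs tT (ek K) <= tT `^ (- (Lk K)%:R).
  apply: (labs_le htT) => x hx.
  have hx2 : x <= - (Lk K)%:Z.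
    by rewrite leNgt; apply/negP => h; move: hx; rewrite ek_zero.
  by rewrite -(natz_R R) -intrN ler_int.
apply: (le_lt_trans he); apply: (Elt htT).
have eS : Sk K = (6 * 3 ^ K)%N by rewrite /Sk !expnS; lia.
pose t : R := (3 ^ K)%:R.
have t0 : 0 < t by rewrite ltr0n expn_gt0.
rewrite /Lk eS !natrM -/t.
lra.
Qed.

End Main.
Local Open Scope classical_set_scope.

Lemma size_P_bound (R : realType) (tT : R) (htT : 1 < tT) (tau : R) (P Q : {poly F3}) :
  1 < tau -> Q != 0 -> dist_rat tT f_a P Q < powR (labs tT (pl Q)) (- tau) ->
  (size P <= (size Q).-1.+1)%N.
Proof.
move=> ht Q0 H; have hB := sol_hB R tT htT tau P Q Q0 H.
apply/leq_sizeP => i hi.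
have hi0 : hfun P Q (Posz i) = 0.
  apply/eqP; apply: contraT => /hB h1.
  have h2 : 0 <= ((size Q).-1)%:R * (tau - 1) :> R by apply: mulr_ge0 => //; lra.
  have h3 : ((size Q).-1)%:R * (1 - tau) = - (((size Q).-1)%:R * (tau - 1)) :> R by ring.
  have h4 : (0 : R) <= (Posz i)%:~R by rewrite natz_R ler0n.
  lra.
move: hi0; rewrite /hfun /lsub pl_pos LmulQf_zero; last first.
  by rewrite ltz_nat.
by move/eqP; rewrite sub0r oppr_eq0 => /eqP.
Qed.

Lemma finite_small : finite_set [set P : {poly F3} | (size P <= 10)%N].
Proof.
have H := finite_image (fun c : {ffun 'I_10 -> F3} => \poly_(i < 10) c (inord i))
   (@finite_finset _ [set: {ffun 'I_10 -> F3}]).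
apply: sub_finite_set H.
move=> P /= hP; exists [ffun i : 'I_10 => P`_i] => //.
apply/polyP => i; rewrite coef_poly.
case: ltnP => h.
  by rewrite ffunE inordK.
by rewrite nth_default //; apply: leq_trans hP h.
Qed.

Local Open Scope ereal_scope.

Theorem proposition5p7 (R : realType) (tT : R) (htT : (1 < tT)%R) :
  ((266 / 100)%:E <= irrationality_exponent tT f_a) /\
  (irrationality_exponent tT f_a <= (281 / 100)%:E).
Proof.
split.
  rewrite /irrationality_exponent; apply: ereal_sup_ubound.
  exists (266 / 100)%R => //.
  rewrite /approx_exponents /=.
  set S := (X in ~ finite_set X) => hfin.
  apply: infinite_nat.
  pose F := fun K : nat => (pk K, qk K).
  have hinj : {in F @^-1` S &, injective F}.
    move=> K1 K2 _ _ [_ hq]; move: (congr1 (fun p : {poly F3} => size p) hq); rewrite !size_qk /Sk => /eqP.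
    rewrite eqSS eqn_pmul2l // eqn_exp2l // eqSS => /eqP //.
  have := finite_preimage hinj hfin.
  apply: sub_finite_set => K _.
  by rewrite /F /S /=; split; [exact: qk_neq0 | exact: sol_lower].
apply: ge_ereal_sup => _ [x hx <-]; rewrite lee_fin.
rewrite leNgt; apply/negP => hlt; apply: hx.
have h10 := finite_setX finite_small finite_small.
apply: sub_finite_set h10 => -[P Q] /= [Q0 H].
have hQ : (size Q <= 10)%N.
  rewrite leqNgt; apply/negP => hQ.
  apply: (no_sol R tT htT x P Q) => //.
  by rewrite -ltnS prednK ?size_poly_gt0.
have := size_P_bound R tT htT x P Q _ Q0 H.
rewrite prednK ?size_poly_gt0 // => hP.
split => //=.
have h1 : (1 < x)%R by lra.
exact: leq_trans (hP h1) hQ.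
Qed.
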